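(* Let $0<\alpha\le\beta$ with $\alpha\le1$, and let $\gamma:[0,1]\to\mathbb{R}^n$ be an $(\alpha,\beta)$-bi-Hölder curve with constant $1\le C_\gamma<\infty$. Then there exists $C=C(\alpha,C_\gamma,n)>0$ such that for all $0<r<1$, $$\Lambda(B(\widehat\gamma,r),r)\le C\, r^{\frac{\alpha-1}{\alpha}}.$$
   Context: A map $\gamma:[0,1]\to\mathbb{R}^n$ is an $(\alpha,\beta)$-bi-Hölder curve with constant $C_\gamma\ge1$ if $\frac1{C_\gamma}|x-y|^\beta\le|\gamma(x)-\gamma(y)|\le C_\gamma|x-y|^\alpha$ for all $x,y\in[0,1]$. $\widehat\gamma:=\gamma([0,1])$. For $A\subset\mathbb{R}^n$, $B(A,r):=\{x:\mathrm{dist}(x,A)\le r\}$. A rectifiable curve is the image of a Lipschitz map $[0,1]\to\mathbb{R}^n$. $\Lambda(E,r):=\inf\{\mathcal{H}^1(\Gamma):\Gamma \text{ a rectifiable curve with } B(\Gamma,r)\supset E\}$. *)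

(* Defs.v *)
From HB Require Import structures.
From mathcomp Require Import all_boot all_order all_algebra.
From mathcomp Require Import all_classical all_reals all_analysis.
Set Implicit Arguments. Unset Strict Implicit. Unset Printing Implicit Defensive.
Import Order.TTheory GRing.Theory Num.Theory.
Local Open Scope classical_set_scope.
Local Open Scope ring_scope.

Section Defs.
Variables (R : realType) (n : nat).
Local Notation V := 'rV[R]_n.

Definition edist (x y : V) : R := Num.sqrt (\sum_(i < n) (x ord0 i - y ord0 i) ^+ 2).

Definition bi_holder (alpha beta C : R) (gamma : R -> V) : Prop :=
  forall x y, x \in `[0, 1] -> y \in `[0, 1] ->
    C^-1 * `|x - y| `^ beta <= edist (gamma x) (gamma y) /\
    edist (gamma x) (gamma y) <= C * `|x - y| `^ alpha.

Definition curve_image (gamma : R -> V) : set V := gamma @` `[0, 1].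

(* B(A,r) = {x : dist(x,A) <= r}, dist(x,A) = inf_{a in A} |x-a| *)
Definition cl_nbhd (A : set V) (r : R) : set V :=
  [set x | forall e : R, 0 < e -> exists2 a, A a & edist x a < r + e].

Definition rectifiable_curve (G : set V) : Prop :=
  exists f : R -> V, (exists L : R, forall s t, s \in `[0, 1] -> t \in `[0, 1] ->
      edist (f s) (f t) <= L * `|s - t|) /\ G = f @` `[0, 1].

(* diameter (in \bar R), diam of the empty set is 0 *)
Definition ediam (U : set V) : \bar R :=
  ereal_sup ([set 0%E] `|` [set (edist x y)%:E | x in U & y in U]).

Definition H1_delta (delta : R) (E : set V) : \bar R :=
  ereal_inf [set (\sum_(0 <= k <oo) ediam (U k))%E |
             U in [set U : nat -> set V |
                   E `<=` \bigcup_k U k /\ forall k, (ediam (U k) <= delta%:E)%E]].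

(* 1-dimensional Hausdorff measure H^1 = lim_{delta->0} H1_delta = sup_{delta>0} *)
Definition H1 (E : set V) : \bar R :=
  ereal_sup [set H1_delta delta E | delta in [set d : R | 0 < d]].

Definition Lambda (E : set V) (r : R) : \bar R :=
  ereal_inf [set H1 G | G in [set G | rectifiable_curve G /\ E `<=` cl_nbhd G r]].

End Defs.

(* Main.v *)
Require Import Defs.
From HB Require Import structures.
From mathcomp Require Import all_boot all_order all_algebra.
From mathcomp Require Import all_classical all_reals all_analysis.
From mathcomp Require Import lra.
Import Order.TTheory GRing.Theory Num.Theory.
Local Open Scope classical_set_scope.
Local Open Scope ring_scope.

Section Aux.
Variables (R : realType) (n : nat).
Local Notation V := 'rV[R]_n.
Local Notation edist := (@Defs.edist R n).

Lemma edist_ge0 (x y : V) : 0 <= edist x y.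
Proof. exact: sqrtr_ge0. Qed.

Lemma edist_coord (x y : V) c : `|x ord0 c - y ord0 c| <= edist x y.
Proof.
rewrite /edist -sqrtr_sqr ler_sqrt; last by apply: sumr_ge0 => i _; exact: sqr_ge0.
rewrite (bigD1 c) //= lerDl; apply: sumr_ge0 => i _; exact: sqr_ge0.
Qed.

Lemma edist_l1 (x y : V) : edist x y <= \sum_c `|x ord0 c - y ord0 c|.
Proof.
set S := \sum_c _.
have [S0 H] : 0 <= S /\ \sum_(i < n) (x ord0 i - y ord0 i) ^+ 2 <= S ^+ 2.
  rewrite /S; apply: (big_rec2 (fun a b => 0 <= b /\ a <= b ^+ 2)).
    by split => //; rewrite expr0n.
  move=> i a b _ [b0 ab]; split; first by rewrite addr_ge0.
  rewrite -real_normK ?num_real //.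
  have := normr_ge0 (x ord0 i - y ord0 i); set u := `|_|.
  move=> u0; nra.
rewrite /edist -(ger0_norm S0) -sqrtr_sqr ler_sqrt //; exact: sqr_ge0.
Qed.

Definition cl (x : R) : R := if x <= 0 then 0 else if x <= 1 then x else 1.
Definition clM (M x : R) : R := if x <= 0 then 0 else if x <= M then x else M.

Ltac cases := repeat (case: ifPn => //; rewrite ?ltNge ?negbK => ?); try lra.

Lemma cl_sum (M : nat) x :
  \sum_(0 <= k < M) cl (x - k%:R) = clM M%:R x.
Proof.
elim: M => [|M IH]; first by rewrite big_nil /clM; cases.
rewrite big_nat_recr //= IH /clM /cl -natr1.
have := ler0n R M.
repeat (case: ifPn => //; rewrite -?ltNge => ?); try lra.
Qed.

Lemma cl1 x : 1 <= x -> cl x = 1.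
Proof. move=> x1; rewrite /cl; repeat (case: ifPn => //; rewrite -?ltNge => ?); lra. Qed.

Lemma cl_mono a b : a <= b -> cl a <= cl b.
Proof. move=> ab; rewrite /cl; repeat (case: ifPn => //; rewrite -?ltNge => ?); lra. Qed.

Lemma clM_lip (M a b : R) : 0 <= M -> a <= b -> clM M b - clM M a <= b - a.
Proof. move=> M0 ab; rewrite /clM; repeat (case: ifPn => //; rewrite -?ltNge => ?); lra. Qed.

Lemma sum_abs_cl (M : nat) a b :
  \sum_(0 <= k < M) `|cl (a - k%:R) - cl (b - k%:R)| <= `|a - b|.
Proof.
wlog ab : a b / a <= b.
  move=> W; have [ab|ba] := leP a b; first exact: W.
  have := W b a (ltW ba); rewrite (distrC b a).
  by under eq_bigr do rewrite distrC.
rewrite (distrC a) ger0_norm ?subr_ge0 //.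
under eq_bigr do rewrite distrC ger0_norm ?subr_ge0 ?cl_mono ?lerD2r //.
rewrite sumrB !cl_sum; apply: clM_lip => //.
Qed.


Definition pl (M : nat) (P : nat -> V) (t : R) : V :=
  \row_c (P 0%N ord0 c + \sum_(0 <= k < M) cl (M%:R * t - k%:R) * (P k.+1 ord0 c - P k ord0 c)).

Lemma pl_node M P j : (0 < M)%N -> (j <= M)%N -> pl M P (j%:R / M%:R) = P j.
Proof.
move=> M0 jM; apply/rowP => c; rewrite mxE.
rewrite mulrC divfK ?pnatr_eq0 -?lt0n //.
rewrite (big_cat_nat (leq0n j) jM) /=.
rewrite [X in _ + (_ + X)]big1_seq; last first.
  move=> k /andP[_]; rewrite mem_index_iota => /andP[jk _].
  rewrite /cl ifT ?mul0r // subr_le0 ler_nat //.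
rewrite addr0 big_nat_cond.
rewrite (eq_bigr (fun k => P k.+1 ord0 c - P k ord0 c)); last first.
  move=> k; rewrite andbT => /andP[_ kj].
  by rewrite cl1 ?mul1r // lerBrDr addrC natr1 ler_nat.
rewrite -big_nat_cond.
rewrite (telescope_sumr (fun k => P k ord0 c)) //.
by rewrite addrC subrK.
Qed.

Lemma pl_lip M (P : nat -> V) (D : R) : 0 <= D ->
  (forall k c, (k < M)%N -> `|P k.+1 ord0 c - P k ord0 c| <= D) ->
  forall s t, edist (pl M P s) (pl M P t) <= n%:R * D * M%:R * `|s - t|.
Proof.
move=> D0 HD s t; apply: le_trans (edist_l1 _ _) _.
apply: le_trans (_ : \sum_(c < n) D * M%:R * `|s - t| <= _); last first.
  by rewrite sumr_const card_ord -!mulrA [n%:R * _]mulr_natl.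
apply: ler_sum => c _; rewrite !mxE.
rewrite opprD addrACA subrr add0r -sumrB.
under eq_bigr do rewrite -mulrBl.
apply: le_trans (ler_norm_sum _ _ _) _.
apply: le_trans (_ : \sum_(0 <= k < M) `|cl (M%:R * s - k%:R) - cl (M%:R * t - k%:R)| * D <= _).
  rewrite big_nat_cond [X in _ <= X]big_nat_cond.
  apply: ler_sum => k; rewrite andbT => /andP[_ kM].
  by rewrite normrM ler_wpM2l // HD.
rewrite -mulr_suml mulrC -mulrA ler_wpM2l //.
apply: le_trans (sum_abs_cl _ _ _) _.
by rewrite -mulrBr normrM ger0_norm.
Qed.

End Aux.
Arguments pl {R n}. Arguments pl_lip {R n}. Arguments pl_node {R n}. Arguments edist_coord {R n}. Arguments edist_l1 {R n}.
Section Aux2.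
Variables (R : realType) (n : nat).
Local Notation V := 'rV[R]_n.
Local Notation edist := (@Defs.edist R n).

Lemma ediam_le (U : set V) (b : R) : 0 <= b ->
  (forall x y, U x -> U y -> edist x y <= b) -> (ediam U <= b%:E)%E.
Proof.
move=> b0 H; apply: ge_ereal_sup => z [->|[x Ux [y Uy <-]]].
  by rewrite lee_fin.
by rewrite lee_fin H.
Qed.

Lemma H1_lip (f : R -> V) (L : R) : 0 <= L ->
  (forall s t, s \in `[0, 1] -> t \in `[0, 1] -> edist (f s) (f t) <= L * `|s - t|) ->
  (H1 (f @` `[0%R, 1%R]) <= (2 * L)%:E)%E.
Proof.
move=> L0 Hf; apply: ge_ereal_sup => _ [delta d0 <-].
set K := (Num.truncn (L / delta)).+1.
have K0 : (0 < K%:R :> R) by rewrite ltr0n.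
have LK : L / K%:R <= delta.
  rewrite ler_pdivrMr // mulrC -ler_pdivrMr //; apply/ltW.
  exact: truncnS_gt.
have LK0 : 0 <= L / K%:R by rewrite divr_ge0 // ltW.
pose U k : set V := if (k <= K)%N then
   f @` (`[k%:R / K%:R, k.+1%:R / K%:R] `&` `[0, 1]) else set0.
pose v k : \bar R := if (k <= K)%N then (L / K%:R)%:E else 0%E.
have dU : forall k, (ediam (U k) <= v k)%E.
  move=> k; rewrite /U /v; case: ifP => _.
    apply: ediam_le => // _ _ [s [Hs Hs01] <-] [t [Ht Ht01] <-].
    apply: le_trans (Hf _ _ Hs01 Ht01) _.
    rewrite ler_wpM2l //.
    move: Hs Ht; rewrite /= !in_itv /= => /andP[s1 s2] /andP[t1 t2].
    have e : k.+1%:R / K%:R = k%:R / K%:R + K%:R^-1 :> R by rewrite -natr1 mulrDl mul1r.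
    rewrite e in s2 t2; rewrite ler_norml; apply/andP; split; lra.
  by apply: ediam_le => // x y [].
apply: (@le_trans _ _ (\sum_(0 <= k <oo) ediam (U k))%E).
  apply: ereal_inf_lbound; exists U => //; split.
    move=> _ [t t01 <-].
    have := t01; rewrite /= in_itv /= => /andP[t0 t1].
    set k := Num.truncn (t * K%:R).
    have tK0 : 0 <= t * K%:R by rewrite mulr_ge0 // ltW.
    exists k => //; rewrite /U ifT; last first.
      rewrite truncn_le_nat; apply: (le_lt_trans (y := K%:R)).
        by rewrite ler_piMl // ltW.
      by rewrite ltr_nat.
    exists t => //; split => //.
    rewrite /= in_itv /=; apply/andP; split.
      by rewrite ler_pdivrMr // truncn_le.
    by rewrite ler_pdivlMr //; apply/ltW/truncnS_gt.
  move=> k; apply: le_trans (dU k) _; rewrite /v; case: ifP => _.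
    by rewrite lee_fin.
  by rewrite lee_fin ltW.
apply: (@le_trans _ _ (\sum_(0 <= k <oo) v k)%E).
  apply: lee_nneseries => [k _ _|k _]; last exact: dU.
  by apply: le_ereal_sup_tmp; exists 0%E => //; left.
rewrite (@nneseries_split _ _ 0 K.+1); last first.
  by move=> k _; rewrite /v; case: ifP => _; rewrite ?lee_fin.
rewrite add0n eseries0 ?adde0; last by move=> i Ki _; rewrite /v leqNgt Ki.
rewrite big_nat_cond (eq_bigr (fun=> (L / K%:R)%:E)); last first.
  by move=> i; rewrite andbT => /andP[_ iK]; rewrite /v ifT.
rewrite -big_nat_cond sumEFin sumr_const_nat subn0 lee_fin.
rewrite -[_ *+ K.+1]mulr_natr mulrAC ler_pdivrMr // -natr1.
have K1 : 1 <= K%:R :> R by rewrite ler1n.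
nra.
Qed.

End Aux2.
Arguments H1_lip {R n}. Arguments ediam_le {R n}.

From mathcomp Require Import ring zify.

Lemma ar1 {R : realType} {n : nat} {s r u : R} : 0 < s -> n%:R * s = r -> u < 6 * r ->
  u < ((6 * n + 1).+1)%:R * s.
Proof. move=> s0 h u6; rewrite -natr1 natrD natrM; nra. Qed.

Lemma ar2 (R : realType) (k s v : R) : k * s <= v -> v < (k + 1) * s -> `|v - k * s| <= s.
Proof. move=> l1 l2; rewrite ler_norml; apply/andP; split; nra. Qed.

Lemma minn_step (c a b : nat) : (a <= b <= a.+1)%N -> (minn a c <= minn b c <= (minn a c).+1)%N.
Proof. move=> /andP[h1 h2]; apply/andP; split; lia. Qed.

Theorem lemma3p10 (R : realType) (n : nat) (alpha Cg : R) :
  0 < alpha -> alpha <= 1 -> 1 <= Cg ->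
  exists C : R, 0 < C /\
    forall (beta : R) (gamma : R -> 'rV[R]_n),
      alpha <= beta -> bi_holder alpha beta Cg gamma ->
      forall r : R, 0 < r -> r < 1 ->
        (Lambda (cl_nbhd (curve_image gamma) r) r
          <= (C * r `^ ((alpha - 1) / alpha))%:E)%E.
Proof.
move=> a0 a1 C1.
pose m := (6 * n + 1).+1.
pose G := {ffun 'I_n -> 'I_m}.
pose K := #|G|.
have K0 : (0 < K)%N by apply/card_gt0P; exists [ffun => ord0].
have Cg0 : 0 < Cg by apply: lt_le_trans C1.
exists (6 * (7 * n + 2)%:R * K%:R * Cg `^ alpha^-1); split.
  by rewrite !mulr_gt0 ?ltr0n ?powR_gt0 ?addn_gt0 ?orbT.
move=> beta gamma ab hol r r0 r1.
pose A := (Cg / r) `^ alpha^-1.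
have Cr : 1 <= Cg / r by rewrite ler_pdivlMr // mul1r; lra.
have ai0 : 0 <= alpha^-1 by rewrite invr_ge0 ltW.
have A1 : 1 <= A.
  have := @ge0_ler_powR R alpha^-1 ai0 1 (Cg / r).
  rewrite powR1; apply; rewrite ?nnegrE //; lra.
pose N := (Num.truncn A).+1.
have N0 : (0 < N%:R :> R) by rewrite ltr0n.
have NA : N%:R <= A + 1.
  by rewrite /N -natr1 lerD2r truncn_le; lra.
have AN : A <= N%:R by apply/ltW/truncnS_gt.
have Hsm : forall d, 0 <= d -> d <= N%:R^-1 -> Cg * d `^ alpha <= r.
  move=> d d0 dN.
  have h1 : d `^ alpha <= (N%:R^-1) `^ alpha.
    by apply: ge0_ler_powR; rewrite ?nnegrE ?invr_ge0; lra.
  have h2 : (N%:R^-1) `^ alpha = (N%:R `^ alpha)^-1.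
    by rewrite -powR_inv1 ?ltW // -powRrM mulN1r powRN.
  have h3 : Cg / r <= N%:R `^ alpha.
    have -> : Cg / r = A `^ alpha.
      by rewrite /A -powRrM mulVf ?lt0r_neq0 // powRr1 // divr_ge0 // ltW.
    by apply: ge0_ler_powR; rewrite ?nnegrE; lra.
  have Q0 : 0 < N%:R `^ alpha by rewrite powR_gt0.
  apply: le_trans (_ : Cg * (N%:R `^ alpha)^-1 <= _).
    by rewrite -h2 ler_wpM2l // ltW.
  rewrite ler_pdivrMr // in h3; by rewrite ler_pdivrMr // mulrC.
pose tau i := (minn i N)%:R / N%:R : R.
have tau01 : forall i, tau i \in `[0, 1].
  move=> i; rewrite in_itv /=; apply/andP; split.
    by rewrite divr_ge0 // ltW.
  by rewrite ler_pdivrMr // mul1r ler_nat geq_minr.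
pose y i := gamma (tau i).
pose s := r / n%:R.
have s0 : 0 <= s by rewrite divr_ge0 // ltW.
pose g0 : G := [ffun => ord0].
pose P j := \row_c (y (j %/ K)%N ord0 c + s * (nth g0 (enum G) (j %% K)%N c : nat)%:R - 3 * r).
pose M := (N.+1 * K)%N.
have M0 : (0 < M)%N by rewrite muln_gt0 K0.
pose D := r + s * m%:R.
have D0 : 0 <= D by rewrite addr_ge0 ?mulr_ge0 // ltW.
pose f := pl M P.
have HD : forall k c, (k < M)%N -> `|P k.+1 ord0 c - P k ord0 c| <= D.
  move=> k c kM; rewrite /P !mxE.
  have ii' : (k %/ K <= k.+1 %/ K <= (k %/ K).+1)%N.
    rewrite divnS //; case: (K %| k.+1)%N => /=.
      by rewrite add1n leqnSn leqnn.
    by rewrite add0n leqnn leqnSn.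
  set i := (k %/ K)%N in ii' *; set i' := (k.+1 %/ K)%N in ii' *.
  have htau : `|tau i' - tau i| <= N%:R^-1.
    rewrite /tau -mulrBl normrM [`|N%:R^-1|]ger0_norm; last by rewrite invr_ge0 ltW.
    apply: ler_piMl; first by rewrite invr_ge0 ltW.
    have /andP[h1 h2] := minn_step N _ _ ii'.
    move: h1 h2; rewrite -!(ler_nat R) -natr1 => h1 h2.
    rewrite ler_norml; apply/andP; split; lra.
  have hy : `|y i' ord0 c - y i ord0 c| <= r.
    apply: le_trans (edist_coord (y i') (y i) c) _.
    have [_ hb] := hol _ _ (tau01 i') (tau01 i).
    by apply: le_trans hb _; apply: Hsm.
  set g1 := nth g0 (enum G) (k.+1 %% K)%N.
  set g2 := nth g0 (enum G) (k %% K)%N.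
  have hg : `|s * (g1 c : nat)%:R - s * (g2 c : nat)%:R| <= s * m%:R.
    rewrite -mulrBr normrM (ger0_norm s0) ler_wpM2l //.
    have := ltn_ord (g1 c); have := ltn_ord (g2 c).
    rewrite -!(ltr_nat R) => l1 l2.
    have := ler0n R (g1 c); have := ler0n R (g2 c) => z1 z2.
    rewrite ler_norml; apply/andP; split; lra.
  have E : forall a1 b1 a0 b0 t : R,
      `|(a1 + b1 - t) - (a0 + b0 - t)| <= `|a1 - a0| + `|b1 - b0|.
    move=> a1' b1' a0' b0' t'.
    have -> : (a1' + b1' - t') - (a0' + b0' - t') = (a1' - a0') + (b1' - b0') by ring.
    exact: ler_normD.
  apply: le_trans (E _ _ _ _ _) _.
  exact: lerD.
pose L := n%:R * D * M%:R.
have L0 : 0 <= L by rewrite !mulr_ge0.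
have Hf : forall s t, s \in `[0, 1] -> t \in `[0, 1] -> Defs.edist (f s) (f t) <= L * `|s - t|.
  by move=> s1 t1 _ _; exact: pl_lip.
apply: (@le_trans _ _ (H1 (f @` `[0%R, 1%R]))).
  apply: ereal_inf_lbound; exists (f @` `[0%R, 1%R]) => //; split.
    by exists f; split => //; exists L.
  move=> x Hx e e0.
  have [_ [t t01 <-] hxa] := Hx r r0.
  have t01' : t \in `[0, 1] := t01.
  have := t01'; rewrite in_itv /= => /andP[t0 t1].
  set i := Num.truncn (t * N%:R).
  have tN0 : 0 <= t * N%:R by rewrite mulr_ge0 // ltW.
  have iN : (i <= N)%N.
    rewrite truncn_le_nat; apply: (le_lt_trans (y := N%:R)).
      by rewrite ler_piMl // ltW.
    by rewrite ltr_nat.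
  have taui : tau i = i%:R / N%:R by rewrite /tau (minn_idPl iN).
  have hti : `|t - tau i| <= N%:R^-1.
    rewrite taui.
    have e1 : t = t * N%:R * N%:R^-1 by rewrite mulfK ?lt0r_neq0.
    rewrite {1}e1 -mulrBl normrM [`|N%:R^-1|]ger0_norm; last by rewrite invr_ge0 ltW.
    apply: ler_piMl; first by rewrite invr_ge0 ltW.
    have := truncn_le (t * N%:R); rewrite tN0 => l1.
    have := truncnS_gt (t * N%:R); rewrite -natr1 => l2.
    rewrite -/i in l1 l2.
    rewrite ger0_norm ?subr_ge0 //; lra.
  have hya : Defs.edist (gamma t) (y i) <= r.
    have [_ hb] := hol _ _ t01' (tau01 i).
    by apply: le_trans hb _; apply: Hsm.
  pose u c := x ord0 c - y i ord0 c + 3 * r.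
  have hu : forall c, 0 <= u c < 6 * r.
    move=> c; have h1 := edist_coord x (gamma t) c.
    have h2 := edist_coord (gamma t) (y i) c.
    move: h1 h2; rewrite /u.
    set p := x ord0 c; set q := gamma t ord0 c; set w := y i ord0 c.
    move=> h1 h2.
    have : `|p - q| < r + r by apply: le_lt_trans h1 hxa.
    move: h2; rewrite !ltr_norml !ler_norml => /andP[? ?] /andP[? ?].
    apply/andP; split; lra.
  pose kc c := Num.truncn (u c / s).
  pose g : G := [ffun c => inord (kc c)].
  have hs : forall c : 'I_n, 0 < s /\ n%:R * s = r.
    move=> c; have n0 : (0 < n)%N by apply: leq_ltn_trans (ltn_ord c).
    split; first by rewrite divr_gt0 // ltr0n.
    by rewrite mulrC divfK // pnatr_eq0 -lt0n.
  have gc : forall c, (g c : nat) = kc c.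
    move=> c; rewrite ffunE inordK // ltnS truncn_le_nat.
    have [sp hsn] := hs c; have /andP[u0 u6] := hu c.
    rewrite ltr_pdivrMr //; exact: (ar1 sp hsn u6).
  have gi : (index g (enum G) < K)%N by rewrite /K cardE index_mem mem_enum.
  set j := (i * K + index g (enum G))%N.
  have jdiv : (j %/ K = i)%N by rewrite divnMDl // divn_small // addn0.
  have jmod : (j %% K = index g (enum G))%N by rewrite modnMDl modn_small.
  have jM : (j <= M)%N.
    apply: leq_trans (_ : (i.+1 * K <= M)%N); last by rewrite /M leq_mul2r ltnS iN orbT.
    by rewrite mulSn addnC ltnW // ltn_add2l.
  exists (f (j%:R / M%:R)).
    exists (j%:R / M%:R) => //=.
    rewrite in_itv /=; apply/andP; split; first by rewrite divr_ge0.
    by rewrite ler_pdivrMr ?ltr0n // mul1r ler_nat.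
  rewrite /f pl_node //.
  apply: le_lt_trans (_ : Defs.edist x (P j) <= r) _; last by rewrite ltrDl.
  apply: le_trans (edist_l1 _ _) _.
  apply: le_trans (_ : \sum_(c < n) s <= _); last first.
    rewrite sumr_const card_ord; case: (posnP n) => [n0|n0].
      by rewrite n0 mulr0n ltW.
    by have [_ <-] := hs (Ordinal n0); rewrite mulr_natl.
  apply: ler_sum => c _; rewrite /P mxE jdiv jmod nth_index ?mem_enum // gc.
  have [sp hsn] := hs c; have /andP[u0 u6] := hu c.
  have l1 : (kc c)%:R * s <= u c.
    by rewrite -ler_pdivlMr // truncn_le divr_ge0 // ltW.
  have l2 : u c < (kc c).+1%:R * s by rewrite -ltr_pdivrMr // truncnS_gt.
  rewrite -[(kc c).+1%:R]natr1 /u in l2; rewrite /u in l1.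
  have -> : x ord0 c - (y i ord0 c + s * (kc c)%:R - 3 * r) = (x ord0 c - y i ord0 c + 3 * r) - (kc c)%:R * s by ring.
  exact: ar2.
have h := H1_lip f L L0 Hf; apply: (le_trans h).
rewrite lee_fin.
have rA : r * A = Cg `^ alpha^-1 * r `^ ((alpha - 1) / alpha).
  rewrite /A powRM ?invr_ge0 ?ltW // -[r^-1]powR_inv1 ?ltW // -powRrM mulrCA.
  congr (_ * _).
  rewrite -[X in X * _](powRr1 (ltW r0)) -powRD; last by rewrite lt0r_neq0 // implybT.
  congr (_ `^ _); rewrite mulN1r mulrBl mulfV ?lt0r_neq0 // div1r.
  by [].
have nD : n%:R * D <= (7 * n + 2)%:R * r.
  rewrite /D /s mulrDr.
  have -> : m%:R = (6 * n + 2)%:R :> R.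
    by rewrite /m [in RHS]addnS.
  case: (posnP n) => [->|n0]; first by rewrite !mul0r add0r mulr_ge0 // ltW.
  rewrite mulrA mulrCA mulfV ?pnatr_eq0 -?lt0n // mulr1.
  nra.
have MA : M%:R <= 3 * A * K%:R.
  by rewrite /M natrM -natr1 ler_wpM2r //; lra.
have nD0 : 0 <= n%:R * D by rewrite mulr_ge0.

have -> : 6 * (7 * n + 2)%:R * K%:R * Cg `^ alpha^-1 * r `^ ((alpha - 1) / alpha) = 6 * (7 * n + 2)%:R * K%:R * (r * A) by rewrite rA !mulrA.
apply: (@le_trans _ _ (2 * (((7 * n + 2)%:R * r) * (3 * A * K%:R)))).
  by rewrite /L ler_wpM2l // ler_pM.
have -> : 2 * ((7 * n + 2)%:R * r * (3 * A * K%:R)) = 6 * (7 * n + 2)%:R * K%:R * (r * A) :> R by ring.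
by [].
Qed.
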